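(* For $0<|q|<1$, the sequences $$\alpha_n=\frac{(-1)^nq^{-2n}(1-q^{4n+2})}{1-q^2},\qquad\beta_n=\frac{(-1)^nq^{-2n}}{(-q;q)_n(q;q)_n}\qquad(n\ge0)$$ form a Bailey pair relative to $a=q$, i.e. $\beta_n=\sum_{r=0}^n\frac{\alpha_r}{(q;q)_{n-r}(q^2;q)_{n+r}}$ for all $n\ge0$.
   Context: $(a;q)_n=\prod_{k=0}^{n-1}(1-aq^k)$ with $(a;q)_0=1$. A Bailey pair relative to $a$ is a pair of sequences with $\beta_n=\sum_{r=0}^n\frac{\alpha_r}{(q;q)_{n-r}(aq;q)_{n+r}}$ for all $n\ge0$. *)

(* Defs.v *)
From HB Require Import structures.
From mathcomp Require Import all_boot all_order all_algebra.
Set Implicit Arguments. Unset Strict Implicit. Unset Printing Implicit Defensive.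
Import Order.TTheory GRing.Theory Num.Theory.
Local Open Scope ring_scope.

Definition qpoch {R : pzRingType} (a q : R) (n : nat) : R :=
  \prod_(k < n) (1 - a * q ^+ k).

Definition bailey_pair {F : fieldType} (a q : F) (alpha beta : nat -> F) : Prop :=
  forall n : nat,
    beta n = \sum_(r < n.+1)
               alpha r / (qpoch q q (n - r) * qpoch (a * q) q (n + r)).

(* Main.v *)
Require Import Defs.
From HB Require Import structures.
From mathcomp Require Import all_boot all_order all_algebra.
From mathcomp Require Import ring zify.
Import Order.TTheory GRing.Theory Num.Theory.
Local Open Scope ring_scope.

Lemma keyalg (F : fieldType) (q s X Z A B : F) :
  q != 0 -> s != 0 -> X != 0 -> Z != 0 -> A != 0 -> B != 0 -> 1 - q^+2 != 0 ->
  1 - q * Z != 0 -> 1 - q * q * (X^+2 * Z) != 0 ->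
  (q ^+ 2)^-1 * (s * (X^+2)^-1 * (1 - X^+4 * q^+2) / (1 - q^+2) / (A * B))
  + (1 - q^+2 * X^+2 * Z^+2) *
    (s * (X^+2)^-1 * (1 - X^+4 * q^+2) / (1 - q^+2) / ((A * (1 - q * Z)) * (B * (1 - q * q * (X^+2 * Z)))))
  = (- s) * (X^+2 * q^+2)^-1 * (X^+2 * q^+2 - 1) * (X^+2 * q^+2 + 1 - q * (1 - q) * (X * q) * (X * Z))
       / ((1 - q^+2) * A * (B * (1 - q * q * (X^+2 * Z))))
    - s * (X^+2)^-1 * (X^+2 - 1) * (X^+2 + 1 - q * (1 - q) * X * (X * Z))
       / ((1 - q^+2) * (A * (1 - q * Z)) * B).
Proof.
move=> hq hs hX hZ hA hB h1 h2 h3; field.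
by rewrite ?hq ?hs ?hX ?hZ ?hA ?hB ?h1 ?h2 ?h3.
Qed.

Lemma qpochS (R : pzRingType) (a q : R) n :
  qpoch a q n.+1 = qpoch a q n * (1 - a * q ^+ n).
Proof. by rewrite /qpoch big_ord_recr. Qed.

Section Main.
Variable C : numClosedFieldType.
Variable q : C.
Hypothesis hq0 : 0 < `|q|.
Hypothesis hq1 : `|q| < 1.

Lemma q_neq0 : q != 0.
Proof. by rewrite -normr_gt0. Qed.

Lemma normX_lt1 k : (0 < k)%N -> `|q ^+ k| < 1.
Proof. move=> hk; rewrite normrX exprn_ilt1 //; lia. Qed.

Lemma qk_ne1 k : (0 < k)%N -> 1 - q ^+ k != 0.
Proof.
move=> hk; rewrite subr_eq0; apply/eqP => h.
by have := normX_lt1 k hk; rewrite -h normr1 ltxx.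
Qed.

Lemma qk_neN1 k : (0 < k)%N -> 1 + q ^+ k != 0.
Proof.
move=> hk; rewrite addr_eq0; apply/eqP => h.
have h' : q ^+ k = -1 by rewrite h opprK.
by have := normX_lt1 k hk; rewrite h' normrN normr1 ltxx.
Qed.

Lemma qpoch_q_neq0 n : qpoch q q n != 0.
Proof.
elim: n => [|n IH]; first by rewrite /qpoch big_ord0 oner_neq0.
by rewrite qpochS mulf_neq0 // -exprS qk_ne1.
Qed.

Lemma qpoch_qq_neq0 n : qpoch (q * q) q n != 0.
Proof.
elim: n => [|n IH]; first by rewrite /qpoch big_ord0 oner_neq0.
by rewrite qpochS mulf_neq0 // -mulrA -!exprS qk_ne1.
Qed.

Lemma qpoch_mq_neq0 n : qpoch (- q) q n != 0.
Proof.
elim: n => [|n IH]; first by rewrite /qpoch big_ord0 oner_neq0.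
by rewrite qpochS mulf_neq0 // mulNr opprK -exprS qk_neN1.
Qed.

Definition alpha (n : nat) : C :=
  (-1) ^+ n * q ^- (2 * n) * (1 - q ^+ (4 * n + 2)) / (1 - q ^+ 2).

Definition t (m r : nat) : C :=
  alpha r / (qpoch q q (m - r) * qpoch (q * q) q (m + r)).

Definition G (m r : nat) : C :=
  (-1) ^+ r * q ^- (2 * r) * (q ^+ (2 * r) - 1)
  * (q ^+ (2 * r) + 1 - q * (1 - q) * q ^+ r * q ^+ m)
  / ((1 - q ^+ 2) * qpoch q q (m.+1 - r) * qpoch (q * q) q (m + r)).

Lemma key m r : (r <= m)%N ->
  q ^- 2 * t m r + (1 - q ^+ (2 * m + 2)) * t m.+1 r = G m r.+1 - G m r.
Proof.
move=> /subnKC <-; set d := (m - r)%N.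
rewrite /t /G /alpha.
have -> : (r + d - r = d)%N by lia.
have -> : ((r + d).+1 - r = d.+1)%N by lia.
have -> : ((r + d).+1 - r.+1 = d)%N by lia.
have -> : ((r + d).+1 + r = (r + d + r).+1)%N by lia.
have -> : ((r + d) + r.+1 = (r + d + r).+1)%N by lia.
rewrite !qpochS.
have e1 : q ^+ (r + d + r) = (q ^+ r) ^+ 2 * q ^+ d.
  by rewrite -exprM -exprD; congr (_ ^+ _); lia.
have e2 : q ^+ (2 * (r + d) + 2) = q ^+ 2 * (q ^+ r) ^+ 2 * (q ^+ d) ^+ 2.
  by rewrite -!exprM -!exprD; congr (_ ^+ _); lia.
have e3 : q ^+ (2 * r) = (q ^+ r) ^+ 2 by rewrite -exprM mulnC.
have e4 : q ^+ (4 * r + 2) = (q ^+ r) ^+ 4 * q ^+ 2.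
  by rewrite -exprM -exprD; congr (_ ^+ _); lia.
have e5 : q ^+ (2 * r.+1) = (q ^+ r) ^+ 2 * q ^+ 2.
  by rewrite -exprM -exprD; congr (_ ^+ _); lia.
have e6 : q ^+ r.+1 = q ^+ r * q by rewrite exprSr.
have e7 : q ^+ (r + d) = q ^+ r * q ^+ d by rewrite exprD.
have e8 : (-1) ^+ r.+1 = - (-1) ^+ r :> C by rewrite exprS mulN1r.
rewrite e1 e2 e3 e4 e5 e6 e7 e8.
have hX : q ^+ r != 0 by rewrite expf_neq0 // q_neq0.
have hZ : q ^+ d != 0 by rewrite expf_neq0 // q_neq0.
rewrite keyalg //.
- exact: q_neq0.
- by rewrite signr_eq0.
- exact: qpoch_q_neq0.
- exact: qpoch_qq_neq0.
- by apply: qk_ne1.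
- by rewrite -exprS qk_ne1.
by rewrite -e1 -mulrA -!exprS qk_ne1.
Qed.

Definition S (m : nat) : C := \sum_(r < m.+1) t m r.

Lemma qpoch0 (R : pzRingType) (a b : R) : qpoch a b 0 = 1.
Proof. by rewrite /qpoch big_ord0. Qed.

Lemma rec m : q ^- 2 * S m + (1 - q ^+ (2 * m + 2)) * S m.+1 = 0.
Proof.
rewrite /S [in X in _ + X]big_ord_recr /= mulrDr addrA !mulr_sumr -big_split /=.
rewrite (eq_bigr (fun i : 'I_m.+1 => G m i.+1 - G m i)); last first.
  by move=> i _; apply: key; have := ltn_ord i.
rewrite -(big_mkord xpredT (fun i => G m i.+1 - G m i)) telescope_sumr //.
have -> : G m 0 = 0 by rewrite /G muln0 expr0 subrr !(mulr0, mul0r).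
rewrite /G /t /alpha subnn qpoch0.
have -> : (m.+1 + m.+1 = (m + m.+1).+1)%N by lia.
rewrite qpochS.
have e1 : q ^+ (m + m.+1) = q * (q ^+ m) ^+ 2.
  by rewrite -exprM -exprS; congr (_ ^+ _); lia.
have e2 : q ^+ (2 * m + 2) = q ^+ 2 * (q ^+ m) ^+ 2.
  by rewrite -exprM -exprD; congr (_ ^+ _); lia.
have e3 : q ^+ (2 * m.+1) = q ^+ 2 * (q ^+ m) ^+ 2.
  by rewrite -exprM -exprD; congr (_ ^+ _); lia.
have e4 : q ^+ (4 * m.+1 + 2) = q ^+ 6 * (q ^+ m) ^+ 4.
  by rewrite -exprM -exprD; congr (_ ^+ _); lia.
have e5 : q ^+ m.+1 = q * q ^+ m by rewrite exprS.
have hB := qpoch_qq_neq0 (m + m.+1).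
have hF : 1 - q * q * q ^+ (m + m.+1) != 0 by rewrite -mulrA -!exprS qk_ne1.
rewrite e1 in hF.
rewrite e1 e2 e3 e4 e5.
have hX : q ^+ m != 0 by rewrite expf_neq0 // q_neq0.
have hq := q_neq0.
have h2 : 1 - q ^+ 2 != 0 by apply: qk_ne1.
field.
by rewrite ?hF ?hB ?hX ?hq ?h2 ?signr_eq0.
Qed.

Definition beta (n : nat) : C :=
  (-1) ^+ n * q ^- (2 * n) / (qpoch (- q) q n * qpoch q q n).

Lemma S_beta n : S n = beta n.
Proof.
elim: n => [|n IH].
  rewrite /S big_ord1 /t /alpha /beta !qpoch0 /= !muln0 expr0 add0n.
  have h2 : 1 - q ^+ 2 != 0 by apply: qk_ne1.
  by rewrite !mul1r divr1 invr1 mul1r mulr1 divff.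
have h := rec n.
have hc : 1 - q ^+ (2 * n + 2) != 0 by apply: qk_ne1; lia.
have -> : S n.+1 = - (q ^- 2 * S n) / (1 - q ^+ (2 * n + 2)).
  apply: (mulfI hc); rewrite mulrCA divff // mulr1; apply/eqP.
  by rewrite -addr_eq0 addrC h.
rewrite IH /beta !qpochS.
have e2 : q ^+ (2 * n + 2) = q ^+ 2 * (q ^+ n) ^+ 2.
  by rewrite -exprM -exprD; congr (_ ^+ _); lia.
have e3 : q ^+ (2 * n.+1) = q ^+ 2 * (q ^+ n) ^+ 2.
  by rewrite -exprM -exprD; congr (_ ^+ _); lia.
have e4 : q ^+ (2 * n) = (q ^+ n) ^+ 2 by rewrite -exprM mulnC.
rewrite e2 in hc.
have hA := qpoch_q_neq0 n.
have hA' := qpoch_mq_neq0 n.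
have hX : q ^+ n != 0 by rewrite expf_neq0 // q_neq0.
have hq := q_neq0.
have h1 : 1 - q * q ^+ n != 0 by rewrite -exprS qk_ne1.
have h1' : 1 - - q * q ^+ n != 0 by rewrite mulNr opprK -exprS qk_neN1.
rewrite e2 e3 e4 [(-1) ^+ n.+1]exprS.
field.
by rewrite h1 hA h1' hA' hX hq exprMn hc.
Qed.

End Main.

Theorem mainTheorem13 (C : numClosedFieldType) (q : C)
  (hq0 : 0 < `|q|) (hq1 : `|q| < 1) :
  bailey_pair q q
    (fun n => (-1) ^+ n * q ^- (2 * n) * (1 - q ^+ (4 * n + 2)) / (1 - q ^+ 2))
    (fun n => (-1) ^+ n * q ^- (2 * n) / (qpoch (- q) q n * qpoch q q n)).
Proof.
move=> n; exact: (esym (@S_beta C q hq0 hq1 n)).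
Qed.
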